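(* Let $W=\tfrac12(\Xi_+-\Xi_-)$ be the half interface width of a traveling wave with speed $\Omega\neq0$, so that $W$ satisfies the traveling-wave interface condition $$\frac{2(1-\kappa)^2}{\tau|\Omega|\delta}+\frac{1-\kappa}{\tau|\Omega|}\,2W=\exp\Big(\frac{1-\kappa}{\kappa\,\tau|\Omega|}\,2W\Big)-1 ,$$ and consider the spectral equation characterizing eigenvalues $\lambda$ with $\mathrm{Re}(\tau\lambda)>-1$, $$1-\exp\Big(-\frac{\kappa\tau\lambda+\kappa-1}{\kappa\,\tau|\Omega|}\,2W\Big)=\frac{(\kappa\tau\lambda+\kappa)(\kappa\tau\lambda+\kappa-1)(\kappa\tau\lambda+\kappa-1+2W)}{\kappa\,\tau|\Omega|}.$$ Using the interface condition together with the rescaling $$\mu=\frac{\tau\lambda}{\varepsilon},\qquad \varepsilon=\frac{\tau|\Omega|}{2W},$$ this spectral equation can be written as $$\exp(+\mu)=-\frac{\kappa}{\delta}\,\frac{2(1-\kappa)^2+(1-\kappa)\,\delta\,2W+\tau|\Omega|\delta}{(\kappa\varepsilon\mu+\kappa)(\kappa\varepsilon\mu+\kappa-1)(\kappa\varepsilon\mu+\kappa-1+2W)-\kappa\,\tau|\Omega|}.$$ Moreover, the right hand side converges for $\tau\to0$ and pointwise in $\mu$ to $-2/\delta$.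
   Context: Mean-field model $\tau\,\partial_t x(t,p)=\sigma(t)+\delta(p-\tfrac12)-H'(x(t,p))$, $p\in[0,1]$, with constraint $\int_0^1 x(t,p)\,dp=\ell(t)$, disorder strength $\delta>0$, relaxation time $\tau>0$, and trilinear $H'(x)=x+1$ for $x\le-\kappa$, $H'(x)=-\frac{1-\kappa}{\kappa}x$ for $|x|\le\kappa$, $H'(x)=x-1$ for $x\ge\kappa$, with $0<\kappa<1$. Traveling waves $x(t,p)=X(p-\Omega t)$ have interface positions $\Xi_-<\Xi_+$ (where the profile crosses $-\kappa$ and $+\kappa$) and exist when the interface condition above holds; this gives $W$ of order $\tau\ln(1/\tau)$ and hence $\varepsilon$ of order $1/\ln(1/\tau)$ as $\tau\to0$. Linearizing around the wave in the comoving frame gives the eigenvalue problem $\tau\lambda Z(P)=\tau\Omega Z'(P)-Z(P)+\kappa^{-1}\Psi(P)Z(P)-\kappa^{-1}\int\Psi(Q)Z(Q)\,dQ$ with $\Psi$ the indicator of $|P|<W$; its eigenvalues with $\mathrm{Re}(\tau\lambda)>-1$ are exactly the solutions of the spectral equation above with $\tau\lambda\neq(1-\kappa)/\kappa$. *)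

(* Defs.v *)
From Stdlib Require Import Reals.
From Coquelicot Require Import Coquelicot.
Open Scope R_scope.

Definition Cexp (z : C) : C :=
  (exp (Re z) * cos (Im z), exp (Re z) * sin (Im z)).

Definition interface_condition (kappa delta tau Omega W : R) : Prop :=
  2 * (1 - kappa) ^ 2 / (tau * Rabs Omega * delta)
  + (1 - kappa) / (tau * Rabs Omega) * (2 * W)
  = exp ((1 - kappa) / (kappa * tau * Rabs Omega) * (2 * W)) - 1.

Definition spectral_equation (kappa tau Omega W : R) (lambda : C) : Prop :=
  let tl : C := (RtoC tau * lambda)%C in
  (RtoC 1 - Cexp (- ((RtoC kappa * tl + RtoC kappa - RtoC 1)
                      / RtoC (kappa * tau * Rabs Omega)) * RtoC (2 * W)))%C
  = ((RtoC kappa * tl + RtoC kappa)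
     * (RtoC kappa * tl + RtoC kappa - RtoC 1)
     * (RtoC kappa * tl + RtoC kappa - RtoC 1 + RtoC (2 * W))
     / RtoC (kappa * tau * Rabs Omega))%C.

Definition eps_resc (tau Omega W : R) : R := tau * Rabs Omega / (2 * W).

Definition rescaled_rhs (kappa delta tau Omega W : R) (mu : C) : C :=
  let e : C := RtoC (eps_resc tau Omega W) in
  (- (RtoC (kappa / delta))
   * RtoC (2 * (1 - kappa) ^ 2 + (1 - kappa) * delta * (2 * W)
           + tau * Rabs Omega * delta)
   / ((RtoC kappa * e * mu + RtoC kappa)
      * (RtoC kappa * e * mu + RtoC kappa - RtoC 1)
      * (RtoC kappa * e * mu + RtoC kappa - RtoC 1 + RtoC (2 * W))
      - RtoC (kappa * tau * Rabs Omega)))%C.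

(* Main.v *)
Require Import Defs.
From Stdlib Require Import Reals Lra.
From Coquelicot Require Import Coquelicot.
Open Scope R_scope.
From Stdlib Require Import Lra.

Lemma Cexp_nz z : Cexp z <> RtoC 0.
Proof.
  unfold Cexp. intro H. injection H as H1 H2.
  assert (exp (Re z) > 0) by apply exp_pos.
  apply Rmult_integral in H1; apply Rmult_integral in H2.
  destruct H1 as [H1|H1]; [lra|]. destruct H2 as [H2|H2]; [lra|].
  pose proof (sin2_cos2 (Im z)). unfold Rsqr in *. rewrite H1, H2 in *. lra.
Qed.

Lemma Cexp_opp z : (Cexp z * Cexp (- z))%C = RtoC 1.
Proof.
  destruct z as [x y]. unfold Cexp; simpl.
  rewrite cos_neg, sin_neg.
  assert (E: exp x * exp (-x) = 1) by (rewrite <- exp_plus; replace (x + - x) with 0 by ring; apply exp_0).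
  pose proof (sin2_cos2 y). unfold Rsqr in *.
  apply injective_projections; simpl.
  - replace (exp x * cos y * (exp (- x) * cos y) - exp x * sin y * (exp (- x) * - sin y))
      with ((exp x * exp (-x)) * (sin y * sin y + cos y * cos y)) by ring. rewrite E, H; ring.
  - replace (exp x * cos y * (exp (- x) * - sin y) + exp x * sin y * (exp (- x) * cos y))
      with 0 by ring. reflexivity.
Qed.

Lemma Cexp_shift z r : Cexp (z + RtoC r)%C = (RtoC (exp r) * Cexp z)%C.
Proof.
  destruct z as [x y]. unfold Cexp; simpl.
  apply injective_projections; simpl; rewrite Rplus_0_r, exp_plus; ring.
Qed.

Lemma Cinv_0 : Cinv (RtoC 0) = RtoC 0.
Proof. unfold Cinv, RtoC; simpl. replace (0 * (0 * 1) + 0 * (0 * 1)) with 0 by ring.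
 unfold Rdiv. rewrite Rinv_0. apply injective_projections; simpl; ring. Qed.

Lemma keyC (u v E Q P c : C) : (u * v = 1)%C -> E <> 0 -> Q <> 0 -> u <> 0 ->
  c = (- (E * Q))%C ->
  ((1 - E * v = P / Q)%C <-> u = (c / (P - Q))%C).
Proof.
  intros Huv HE HQ Hu Hc. subst c.
  destruct (Ceq_dec (P - Q) 0) as [H0|H0].
  - assert (P = Q). { apply Ceq_minus. exact H0. } subst P.
    split; intro H.
    + exfalso. replace (Q / Q)%C with (RtoC 1) in H by (field; exact HQ).
      assert (E * v = 0)%C. { apply (f_equal (fun w => (1 - w)%C)) in H. ring_simplify in H. 
        rewrite <- H. ring. }
      destruct (Ceq_dec v 0) as [Hv|Hv]; [|exact (Cmult_neq_0 _ _ HE Hv H1)].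
      subst v. rewrite Cmult_0_r in Huv. apply C1_nz. rewrite Huv. reflexivity.
    + exfalso. unfold Cdiv in H. rewrite H0, Cinv_0, Cmult_0_r in H. tauto.
  - assert (v = / u)%C. { field_simplify_eq; auto. rewrite <- Huv. ring. }
    subst v. split; intro H.
    + apply (f_equal (fun w => w * Q)%C) in H. unfold Cdiv in H.
      rewrite <- Cmult_assoc, Cinv_l, Cmult_1_r in H by auto.
      field_simplify_eq; auto.
      apply (f_equal (fun w => u * w)%C) in H.
      field_simplify in H; auto. rewrite <- H. ring.
    + rewrite H. field. auto.
Qed.

Lemma RtoC_nz x : x <> 0 -> RtoC x <> RtoC 0.
Proof. intros H H'. apply H. injection H'. auto. Qed.

Lemma part1 (kappa delta Omega : R)
  (hk : 0 < kappa < 1) (hd : 0 < delta) (hO : Omega <> 0) :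
  (forall tau W : R, 0 < tau -> 0 < W ->
     interface_condition kappa delta tau Omega W ->
     forall lambda : C,
       let mu : C := (RtoC tau * lambda / RtoC (eps_resc tau Omega W))%C in
       spectral_equation kappa tau Omega W lambda
       <-> Cexp mu = rescaled_rhs kappa delta tau Omega W mu).
Proof.
  intros tau W Ht HW Hic lambda mu.
  assert (HO : 0 < Rabs Omega) by (apply Rabs_pos_lt; auto).
  assert (He : eps_resc tau Omega W <> 0).
  { unfold eps_resc. apply Rgt_not_eq. apply Rdiv_lt_0_compat; [apply Rmult_lt_0_compat|]; lra. }
  assert (Hk0 : RtoC kappa <> 0) by (apply RtoC_nz; lra).
  assert (Ht0 : RtoC tau <> 0) by (apply RtoC_nz; lra).
  assert (HO0 : RtoC (Rabs Omega) <> 0) by (apply RtoC_nz; lra).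
  assert (HW0 : RtoC W <> 0) by (apply RtoC_nz; lra).
  assert (H20 : RtoC 2 <> 0) by (apply RtoC_nz; lra).
  assert (Htl : (RtoC kappa * (RtoC tau * lambda))%C = (RtoC kappa * RtoC (eps_resc tau Omega W) * mu)%C).
  { unfold mu. field. apply RtoC_nz; auto. }
  set (r := (1 - kappa) / (kappa * tau * Rabs Omega) * (2 * W)).
  assert (HX : (- ((RtoC kappa * (RtoC tau * lambda) + RtoC kappa - RtoC 1)
                      / RtoC (kappa * tau * Rabs Omega)) * RtoC (2 * W))%C = (- mu + RtoC r)%C).
  { unfold mu, r, eps_resc.
    rewrite ?RtoC_mult, ?RtoC_div, ?RtoC_minus, ?RtoC_mult by (try apply Rgt_not_eq; try apply Rmult_lt_0_compat; try apply Rmult_lt_0_compat; lra).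
    rewrite ?RtoC_mult. field. auto 10. }
  unfold spectral_equation. cbv zeta. rewrite HX, Cexp_shift, Htl.
  unfold rescaled_rhs. cbv zeta.
  apply keyC.
  - apply Cexp_opp.
  - apply RtoC_nz. apply Rgt_not_eq, exp_pos.
  - apply RtoC_nz. apply Rgt_not_eq. apply Rmult_lt_0_compat; [apply Rmult_lt_0_compat|]; lra.
  - apply Cexp_nz.
  - rewrite <- RtoC_opp, <- !RtoC_mult, <- RtoC_opp. f_equal.
    unfold interface_condition in Hic. fold r in Hic.
    assert (exp r = 2 * (1 - kappa) ^ 2 / (tau * Rabs Omega * delta)
      + (1 - kappa) / (tau * Rabs Omega) * (2 * W) + 1) by lra.
    rewrite H. field. lra.
Qed.
Section L.
Context {T : Type} {F : (T -> Prop) -> Prop} {FF : Filter F}.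

Lemma C_lim_split (f : T -> C) (z : C) :
  filterlim (fun t => fst (f t)) F (locally (fst z)) ->
  filterlim (fun t => snd (f t)) F (locally (snd z)) ->
  filterlim f F (locally z).
Proof.
  intros H1 H2. apply filterlim_locally. intros eps.
  apply filterlim_locally with (eps := eps) in H1.
  apply filterlim_locally with (eps := eps) in H2.
  generalize (filter_and _ _ H1 H2). apply filter_imp. intros t [A B]. split; assumption.
Qed.

Lemma C_lim_fst (f : T -> C) (z : C) : filterlim f F (locally z) ->
  filterlim (fun t => fst (f t)) F (locally (fst z)).
Proof.
  intros H. apply filterlim_locally. intros eps.
  apply filterlim_locally with (eps := eps) in H.
  generalize H. apply filter_imp. intros t [A B]. exact A.
Qed.

Lemma C_lim_snd (f : T -> C) (z : C) : filterlim f F (locally z) ->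
  filterlim (fun t => snd (f t)) F (locally (snd z)).
Proof.
  intros H. apply filterlim_locally. intros eps.
  apply filterlim_locally with (eps := eps) in H.
  generalize H. apply filter_imp. intros t [A B]. exact B.
Qed.

Lemma R_lim_plus (f g : T -> R) x y : filterlim f F (locally x) -> filterlim g F (locally y) ->
  filterlim (fun t => f t + g t) F (locally (x + y)).
Proof.
  intros Hf Hg. eapply filterlim_comp_2; [exact Hf|exact Hg|].
  apply (@filterlim_plus R_AbsRing R_NormedModule).
Qed.

Lemma R_lim_mult (f g : T -> R) x y : filterlim f F (locally x) -> filterlim g F (locally y) ->
  filterlim (fun t => f t * g t) F (locally (x * y)).
Proof.
  intros Hf Hg. eapply filterlim_comp_2; [exact Hf|exact Hg|].
  apply (@filterlim_mult R_AbsRing).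
Qed.

Lemma R_lim_opp (f : T -> R) x : filterlim f F (locally x) ->
  filterlim (fun t => - f t) F (locally (- x)).
Proof.
  intros Hf. eapply filterlim_comp; [exact Hf|].
  apply (@filterlim_opp R_AbsRing R_NormedModule).
Qed.

Lemma R_lim_inv (f : T -> R) x : x <> 0 -> filterlim f F (locally x) ->
  filterlim (fun t => / f t) F (locally (/ x)).
Proof.
  intros Hx Hf. eapply filterlim_comp; [exact Hf|].
  apply (filterlim_Rbar_inv (Finite x)). intro H. injection H. auto.
Qed.

Lemma R_lim_const (x : R) : filterlim (fun _ : T => x) F (locally x).
Proof. apply filterlim_const. Qed.

Lemma C_lim_plus (f g : T -> C) x y : filterlim f F (locally x) -> filterlim g F (locally y) ->
  filterlim (fun t => (f t + g t)%C) F (locally (x + y)%C).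
Proof.
  intros Hf Hg. apply C_lim_split; simpl.
  - apply R_lim_plus; apply C_lim_fst; auto.
  - apply R_lim_plus; apply C_lim_snd; auto.
Qed.

Lemma C_lim_opp (f : T -> C) x : filterlim f F (locally x) ->
  filterlim (fun t => (- f t)%C) F (locally (- x)%C).
Proof.
  intros Hf. apply C_lim_split; simpl.
  - apply R_lim_opp; apply C_lim_fst; auto.
  - apply R_lim_opp; apply C_lim_snd; auto.
Qed.

Lemma C_lim_minus (f g : T -> C) x y : filterlim f F (locally x) -> filterlim g F (locally y) ->
  filterlim (fun t => (f t - g t)%C) F (locally (x - y)%C).
Proof. intros. apply C_lim_plus; auto. apply C_lim_opp; auto. Qed.

Lemma C_lim_mult (f g : T -> C) x y : filterlim f F (locally x) -> filterlim g F (locally y) ->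
  filterlim (fun t => (f t * g t)%C) F (locally (x * y)%C).
Proof.
  intros Hf Hg. apply C_lim_split; simpl.
  - apply R_lim_plus; [|apply R_lim_opp]; apply R_lim_mult;
      first [apply C_lim_fst | apply C_lim_snd]; auto.
  - apply R_lim_plus; apply R_lim_mult;
      first [apply C_lim_fst | apply C_lim_snd]; auto.
Qed.

Lemma C_lim_inv (f : T -> C) x : x <> RtoC 0 -> filterlim f F (locally x) ->
  filterlim (fun t => (/ f t)%C) F (locally (/ x)%C).
Proof.
  intros Hx Hf.
  assert (Hn : fst x ^ 2 + snd x ^ 2 <> 0).
  { destruct x as [a b]; simpl. intro H. apply Hx.
    assert (a = 0) by nra. assert (b = 0) by nra. subst. reflexivity. }
  pose proof (C_lim_fst _ _ Hf) as H1. pose proof (C_lim_snd _ _ Hf) as H2.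
  assert (Hd : filterlim (fun t => fst (f t) ^ 2 + snd (f t) ^ 2) F (locally (fst x ^ 2 + snd x ^ 2))).
  { simpl. apply R_lim_plus; apply R_lim_mult; auto; apply R_lim_mult; auto; apply R_lim_const. }
  apply C_lim_split; unfold Cinv; simpl.
  - apply R_lim_mult; auto. apply R_lim_inv; auto.
  - apply R_lim_mult. apply R_lim_opp; auto. apply R_lim_inv; auto.
Qed.

Lemma C_lim_RtoC (f : T -> R) x : filterlim f F (locally x) ->
  filterlim (fun t => RtoC (f t)) F (locally (RtoC x)).
Proof. intros Hf. apply C_lim_split; simpl; auto. apply R_lim_const. Qed.

Lemma C_lim_const (x : C) : filterlim (fun _ : T => x) F (locally x).
Proof. apply filterlim_const. Qed.

End L.

Lemma lim_right (f : R -> R) l :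
  (forall eps, 0 < eps -> exists d, 0 < d /\ forall t, 0 < t < d -> Rabs (f t - l) < eps) ->
  filterlim f (at_right 0) (locally l).
Proof.
  intros H. apply filterlim_locally. intros eps.
  destruct (H eps (cond_pos eps)) as [d [Hd H']]. exists (mkposreal d Hd).
  intros t Hb Ht. change (Rabs (t - 0) < d) in Hb. change (Rabs (f t - l) < eps).
  apply H'. rewrite Rminus_0_r in Hb. apply Rabs_def2 in Hb. lra.
Qed.

Lemma exp_le x y : x <= y -> exp x <= exp y.
Proof. intros [H|H]; [left; apply exp_increasing; auto|subst; lra]. Qed.

Lemma e_small K d a W eps : 0 < K < 1 -> 0 < d -> 0 < a -> 0 < W -> 0 < eps ->
  2 * (1 - K) ^ 2 / (a * d) + (1 - K) / a * (2 * W) = exp ((1 - K) / (K * a) * (2 * W)) - 1 ->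
  a < 2 * (1 - K) ^ 2 / d / exp ((1 - K) / K / eps) ->
  a / (2 * W) < eps.
Proof.
  intros HK Hd Ha HW He Hi Hs.
  destruct (Rlt_or_le (a / (2 * W)) eps) as [H|H]; auto. exfalso.
  set (u := a / (2 * W)) in *.
  assert (Hu : 0 < u) by (unfold u; apply Rdiv_lt_0_compat; lra).
  assert (HW2 : 2 * W = a / u) by (unfold u; field; lra).
  rewrite HW2 in Hi.
  replace ((1 - K) / (K * a) * (a / u)) with ((1 - K) / K * / u) in Hi by (field; lra).
  assert (Hx : (1 - K) / K * / u <= (1 - K) / K / eps).
  { unfold Rdiv at 2. apply Rmult_le_compat_l. apply Rlt_le, Rdiv_lt_0_compat; lra.
    apply Rinv_le_contravar; lra. }
  apply exp_le in Hx.
  set (X := exp ((1 - K) / K / eps)) in *.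
  assert (HX : 0 < X) by apply exp_pos.
  assert (H1 : 0 <= (1 - K) / a * (a / u)).
  { replace ((1 - K) / a * (a / u)) with ((1-K) / u) by (field; lra).
    apply Rlt_le, Rdiv_lt_0_compat; lra. }
  assert (H2 : 2 * (1 - K) ^ 2 / (a * d) < X) by lra.
  assert (H3 : 2 * (1 - K) ^ 2 / d < a * X).
  { replace (2 * (1 - K) ^ 2 / d) with (a * (2 * (1 - K) ^ 2 / (a * d))) by (field; lra).
    apply Rmult_lt_compat_l; lra. }
  assert (H4 : a * X < 2 * (1 - K) ^ 2 / d).
  { replace (2 * (1 - K) ^ 2 / d) with ((2 * (1 - K) ^ 2 / d / X) * X) by (field; lra).
    apply Rmult_lt_compat_r; lra. }
  lra.
Qed.

Lemma W_small K d a W eps : 0 < K < 1 -> 0 < d -> 0 < a -> 0 < W -> 0 < eps ->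
  2 * (1 - K) ^ 2 / (a * d) + (1 - K) / a * (2 * W) = exp ((1 - K) / (K * a) * (2 * W)) - 1 ->
  a < Rmin 1 (Rmin ((((1 - K) / K) ^ 2 / 4) * eps / 2)
                   ((((1 - K) / K) ^ 2 / 4) * eps ^ 2 / (2 * (2 * (1 - K) ^ 2 / d + 1)))) ->
  2 * W < eps.
Proof.
  intros HK Hd Ha HW He Hi Hs.
  set (c := (1 - K) / K) in *. set (b := c ^ 2 / 4) in *. set (A := 2 * (1 - K) ^ 2 / d) in *.
  assert (Hc : 0 < c) by (unfold c; apply Rdiv_lt_0_compat; lra).
  assert (Hb : 0 < b) by (unfold b; nra).
  assert (HA : 0 < A) by (unfold A; apply Rdiv_lt_0_compat; nra).
  assert (Ha1 : a < 1) by (eapply Rlt_le_trans; [exact Hs| apply Rmin_l]).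
  assert (Ha2 : a < b * eps / 2) by
    (eapply Rlt_le_trans; [exact Hs|]; eapply Rle_trans; [apply Rmin_r|apply Rmin_l]).
  assert (Ha3 : a < b * eps ^ 2 / (2 * (A + 1))) by
    (eapply Rlt_le_trans; [exact Hs|]; eapply Rle_trans; [apply Rmin_r|apply Rmin_r]).
  set (z := 2 * W) in *. assert (Hz : 0 < z) by (unfold z; lra).
  set (t := (1 - K) / (K * a) * z) in *.
  assert (Ht : t = c * z / a) by (unfold t, c; field; lra).
  assert (Hexp : (t/2) * (t/2) < exp t).
  { assert (Ee : exp t = exp (t/2) * exp (t/2)) by (rewrite <- exp_plus; f_equal; field).
    rewrite Ee.
    assert (0 < t / 2) by (rewrite Ht; apply Rmult_lt_0_compat; [apply Rdiv_lt_0_compat|]; nra).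
    pose proof (exp_ineq1_le (t/2)). nra. }
  assert (Hi' : exp t = A / a + (1 - K) * z / a + 1).
  { assert (exp t = 2 * (1 - K) ^ 2 / (a * d) + (1 - K) / a * z + 1) by lra.
    rewrite H. unfold A. field. lra. }
  assert (Hq : b * z * z < A * a + a * z + a * a).
  { assert (E1 : (t/2)*(t/2) = b * z * z / (a * a)) by (rewrite Ht; unfold b; field; lra).
    assert (E2 : b * z * z / (a * a) < A / a + (1 - K) * z / a + 1) by lra.
    apply (Rmult_lt_compat_r (a * a)) in E2; [|nra].
    replace (b * z * z / (a * a) * (a * a)) with (b * z * z) in E2 by (field; lra).
    replace ((A / a + (1 - K) * z / a + 1) * (a * a)) with (A * a + (1 - K) * z * a + a * a) in E2 by (field; lra).
    assert (0 < K * (z * a)) by (apply Rmult_lt_0_compat; nra).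
    replace ((1 - K) * z * a) with (a * z - K * (z * a)) in E2 by ring. lra. }
  destruct (Rlt_or_le z eps) as [H|H]; auto. exfalso.
  assert (H0a : b * z * (z - eps) >= 0) by (apply Rle_ge; apply Rmult_le_pos; nra).
  assert (H0b : a * a < a * 1) by (apply Rmult_lt_compat_l; lra).
  assert (H1 : b * eps * z < (A + 1) * a + a * z) by nra.
  assert (H0c : a * z < (b * eps / 2) * z) by (apply Rmult_lt_compat_r; lra).
  assert (H2 : b * eps / 2 * z < (A + 1) * a) by nra.
  assert (H3 : (A + 1) * a < b * eps ^ 2 / 2).
  { apply (Rmult_lt_compat_l (A + 1)) in Ha3; [|lra].
    replace ((A + 1) * (b * eps ^ 2 / (2 * (A + 1)))) with (b * eps ^ 2 / 2) in Ha3 by (field; lra).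
    exact Ha3. }
  nra.
Qed.

Lemma part2 (kappa delta Omega : R)
  (hk : 0 < kappa < 1) (hd : 0 < delta) (hO : Omega <> 0) :
  (forall Wf : R -> R,
     (forall tau : R, 0 < tau ->
        0 < Wf tau /\ interface_condition kappa delta tau Omega (Wf tau)) ->
     forall mu : C,
       filterlim (fun tau => rescaled_rhs kappa delta tau Omega (Wf tau) mu)
         (at_right 0) (locally (RtoC (- 2 / delta)))).
Proof.
  intros Wf HWf mu.
  set (O := Rabs Omega).
  assert (HO : 0 < O) by (apply Rabs_pos_lt; auto).
  assert (HI : forall tau, 0 < tau -> 0 < Wf tau /\
     2 * (1 - kappa) ^ 2 / ((tau * O) * delta) + (1 - kappa) / (tau * O) * (2 * Wf tau)
     = exp ((1 - kappa) / (kappa * (tau * O)) * (2 * Wf tau)) - 1).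
  { intros tau Ht. destruct (HWf tau Ht) as [H1 H2]. split; auto.
    unfold interface_condition in H2. fold O in H2.
    replace (kappa * (tau * O)) with (kappa * tau * O) by ring. exact H2. }
  assert (ha : filterlim (fun tau => tau) (at_right 0) (locally 0)).
  { apply lim_right. intros eps He. exists eps. split; auto. intros t Ht.
    rewrite Rminus_0_r, Rabs_pos_eq; lra. }
  assert (hW : filterlim Wf (at_right 0) (locally 0)).
  { apply lim_right. intros eps He.
    set (m := Rmin 1 (Rmin ((((1 - kappa) / kappa) ^ 2 / 4) * eps / 2)
                   ((((1 - kappa) / kappa) ^ 2 / 4) * eps ^ 2 / (2 * (2 * (1 - kappa) ^ 2 / delta + 1))))).
    assert (Hc : 0 < (1 - kappa) / kappa) by (apply Rdiv_lt_0_compat; lra).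
    assert (HA : 0 < 2 * (1 - kappa) ^ 2 / delta) by (apply Rdiv_lt_0_compat; nra).
    assert (Hm : 0 < m).
    { unfold m. repeat apply Rmin_pos; try lra.
      - apply Rmult_lt_0_compat; [|lra]. apply Rmult_lt_0_compat; [|lra]. nra.
      - apply Rdiv_lt_0_compat; [|lra]. apply Rmult_lt_0_compat; [|nra]. nra. }
    exists (m / O). split; [apply Rdiv_lt_0_compat; lra|].
    intros t Ht. destruct (HI t (proj1 Ht)) as [Hw Hi].
    assert (Hta : t * O < m).
    { destruct Ht as [Ht1 Ht2]. apply (Rmult_lt_compat_r O) in Ht2; auto.
      replace (m / O * O) with m in Ht2 by (field; lra). exact Ht2. }
    pose proof (W_small kappa delta (t * O) (Wf t) eps hk hd ltac:(nra) Hw He Hi Hta).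
    rewrite Rminus_0_r, Rabs_pos_eq; lra. }
  assert (he : filterlim (fun tau => eps_resc tau Omega (Wf tau)) (at_right 0) (locally 0)).
  { apply lim_right. intros eps He.
    set (m := 2 * (1 - kappa) ^ 2 / delta / exp ((1 - kappa) / kappa / eps)).
    assert (Hm : 0 < m).
    { unfold m. apply Rdiv_lt_0_compat; [|apply exp_pos]. apply Rdiv_lt_0_compat; nra. }
    exists (m / O). split; [apply Rdiv_lt_0_compat; lra|].
    intros t Ht. destruct (HI t (proj1 Ht)) as [Hw Hi].
    assert (Hta : t * O < m).
    { destruct Ht as [Ht1 Ht2]. apply (Rmult_lt_compat_r O) in Ht2; auto.
      replace (m / O * O) with m in Ht2 by (field; lra). exact Ht2. }
    pose proof (e_small kappa delta (t * O) (Wf t) eps hk hd ltac:(nra) Hw He Hi Hta).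
    unfold eps_resc. fold O. rewrite Rminus_0_r, Rabs_pos_eq; [lra|].
    apply Rlt_le, Rdiv_lt_0_compat; nra. }
  unfold rescaled_rhs. cbv zeta. unfold Cdiv.
  set (L := ((- RtoC (kappa / delta) * RtoC (2 * (1 - kappa) ^ 2 + (1 - kappa) * delta * (2 * 0) + 0 * O * delta)) *
     / ((RtoC kappa * RtoC 0 * mu + RtoC kappa) * (RtoC kappa * RtoC 0 * mu + RtoC kappa - RtoC 1) *
        (RtoC kappa * RtoC 0 * mu + RtoC kappa - RtoC 1 + RtoC (2 * 0)) - RtoC (kappa * 0 * O)))%C).
  assert (Hden : ((RtoC kappa * RtoC 0 * mu + RtoC kappa) * (RtoC kappa * RtoC 0 * mu + RtoC kappa - RtoC 1) *
        (RtoC kappa * RtoC 0 * mu + RtoC kappa - RtoC 1 + RtoC (2 * 0)) - RtoC (kappa * 0 * O))%C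
        = RtoC (kappa * (kappa - 1) * (kappa - 1))).
  { assert (E0 : (RtoC kappa * RtoC 0 * mu)%C = RtoC 0) by (rewrite Cmult_0_r, Cmult_0_l; reflexivity). rewrite E0.
    repeat first [rewrite <- RtoC_plus | rewrite <- RtoC_minus | rewrite <- RtoC_mult]. f_equal. ring. }
  assert (HL : L = RtoC (- 2 / delta)).
  { unfold L. rewrite Hden. rewrite <- RtoC_opp, <- RtoC_mult, <- RtoC_inv, <- RtoC_mult.
    - f_equal. field. split; lra.
    - assert (0 < kappa * ((1 - kappa) * (1 - kappa))) by (apply Rmult_lt_0_compat; nra). nra. }
  rewrite <- HL. unfold L.
  apply C_lim_mult.
  - apply C_lim_mult. apply C_lim_const.
    apply C_lim_RtoC. apply R_lim_plus. apply R_lim_plus. apply R_lim_const.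
    apply R_lim_mult. apply R_lim_const. apply R_lim_mult. apply R_lim_const. exact hW.
    apply R_lim_mult; [|apply R_lim_const]. apply R_lim_mult; [exact ha|apply R_lim_const].
  - apply C_lim_inv.
    + rewrite Hden. apply RtoC_nz.
      assert (0 < kappa * ((1 - kappa) * (1 - kappa))) by (apply Rmult_lt_0_compat; nra). nra.
    + assert (HeC : filterlim (fun t => (RtoC kappa * RtoC (eps_resc t Omega (Wf t)) * mu)%C) (at_right 0)
                   (locally (RtoC kappa * RtoC 0 * mu)%C)).
      { apply C_lim_mult; [|apply C_lim_const]. apply C_lim_mult; [apply C_lim_const|]. apply C_lim_RtoC. exact he. }
      apply C_lim_minus.
      * apply C_lim_mult; [apply C_lim_mult|].
        -- apply C_lim_plus; [exact HeC|apply C_lim_const].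
        -- apply C_lim_minus; [|apply C_lim_const]. apply C_lim_plus; [exact HeC|apply C_lim_const].
        -- apply C_lim_plus. apply C_lim_minus; [|apply C_lim_const]. apply C_lim_plus; [exact HeC|apply C_lim_const].
           apply C_lim_RtoC. apply R_lim_mult; [apply R_lim_const|exact hW].
      * apply C_lim_RtoC. apply R_lim_mult; [|apply R_lim_const]. apply R_lim_mult; [apply R_lim_const|exact ha].
Qed.

Theorem lemma2p3 (kappa delta Omega : R)
  (hk : 0 < kappa < 1) (hd : 0 < delta) (hO : Omega <> 0) :
  (forall tau W : R, 0 < tau -> 0 < W ->
     interface_condition kappa delta tau Omega W ->
     forall lambda : C,
       let mu : C := (RtoC tau * lambda / RtoC (eps_resc tau Omega W))%C in
       spectral_equation kappa tau Omega W lambda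
       <-> Cexp mu = rescaled_rhs kappa delta tau Omega W mu)
  /\
  (forall Wf : R -> R,
     (forall tau : R, 0 < tau ->
        0 < Wf tau /\ interface_condition kappa delta tau Omega (Wf tau)) ->
     forall mu : C,
       filterlim (fun tau => rescaled_rhs kappa delta tau Omega (Wf tau) mu)
         (at_right 0) (locally (RtoC (- 2 / delta)))).
Proof.
  split; [apply part1 | apply part2]; auto.
Qed.
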